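(* Let $s,t\in\mathbb{R}$ with $s\ne0$, $s^2+4t>0$, and suppose $q=\varphi'_{s,t}/\varphi_{s,t}$ satisfies $0<\lvert q\rvert<1$. Let $a,b$ be real numbers, and let $f$ be a function defined on a set containing the points $aq^n,bq^n$ ($n\ge0$), with values in $\mathbb{R}$ or $\mathbb{C}$, such that $\mathbf{D}_{s,t}f\in\mathcal{L}^1_{s,t}[a,b]$. Then: (1) $\displaystyle\int_a^b(\mathbf{D}_{s,t}f)(x)\,d_{s,t}x=\Big[f(b)-\lim_{n\to\infty}f(bq^n)\Big]-\Big[f(a)-\lim_{n\to\infty}f(aq^n)\Big]$, provided these limits exist; (2) if in addition $f$ is continuous at $0$, then $\int_a^b(\mathbf{D}_{s,t}f)(x)\,d_{s,t}x=f(b)-f(a)$.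
   Context: $\varphi_{s,t}=\frac{s+\sqrt{s^2+4t}}{2}$, $\varphi'_{s,t}=\frac{s-\sqrt{s^2+4t}}{2}$. The $(s,t)$-derivative is $(\mathbf{D}_{s,t}f)(x)=\frac{f(\varphi_{s,t}x)-f(\varphi'_{s,t}x)}{(\varphi_{s,t}-\varphi'_{s,t})x}$ for $x\ne0$ and $(\mathbf{D}_{s,t}f)(0)=f'(0)$. For $0<\lvert q\rvert<1$, the $(s,t)$-integral is $\int_a^b g(x)\,d_{s,t}x=(1-q)\sum_{n=0}^\infty\big[bg(bq^n/\varphi_{s,t})-ag(aq^n/\varphi_{s,t})\big]q^n$. $\mathcal{L}^1_{s,t}[a,b]$ is the set of functions $g$ such that $\lvert g\rvert$ is $(s,t)$-integrable on $[a,b]$, i.e. $\int_a^b\lvert g\rvert\,d_{s,t}x<\infty$ (the defining series converges). *)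

(* Defs.v *)
(* Functions take complex values (covers the real case). *)
From Stdlib Require Import Reals.
From Coquelicot Require Import Coquelicot.
Open Scope R_scope.

Definition phi (s t : R) : R := (s + sqrt (s ^ 2 + 4 * t)) / 2.
Definition phi' (s t : R) : R := (s - sqrt (s ^ 2 + 4 * t)) / 2.

Definition qst (s t : R) : R := phi' s t / phi s t.

Definition deriv0 (f : R -> C) : C :=
  (Derive (fun x => Re (f x)) 0, Derive (fun x => Im (f x)) 0).

Definition Dst (s t : R) (f : R -> C) (x : R) : C :=
  if Req_EM_T x 0 then deriv0 f
  else Cdiv (Cminus (f (phi s t * x)) (f (phi' s t * x)))
            (RtoC ((phi s t - phi' s t) * x)).

Definition st_integral_term (s t : R) (g : R -> C) (a b : R) (n : nat) : C :=
  let q := qst s t in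
  Cmult (RtoC ((1 - q) * q ^ n))
        (Cminus (Cmult (RtoC b) (g (b * q ^ n / phi s t)))
                (Cmult (RtoC a) (g (a * q ^ n / phi s t)))).

Definition is_st_integral (s t : R) (g : R -> C) (a b : R) (v : C) : Prop :=
  is_series (st_integral_term s t g a b) v.

Definition L1st (s t : R) (a b : R) (g : R -> C) : Prop :=
  ex_series (fun n : nat =>
    let q := qst s t in
    (1 - q) * q ^ n * (b * Cmod (g (b * q ^ n / phi s t))
                       - a * Cmod (g (a * q ^ n / phi s t)))).

(* Main.v *)
Require Import Defs.
From Stdlib Require Import Reals Lra Lia.
From Coquelicot Require Import Coquelicot.
Open Scope R_scope.

Lemma term_eq s t f b n :
  phi s t <> 0 -> phi s t - phi' s t <> 0 -> qst s t <> 0 -> 1 - qst s t <> 0 ->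
  Cmult (RtoC ((1 - qst s t) * qst s t ^ n))
        (Cmult (RtoC b) (Dst s t f (b * qst s t ^ n / phi s t)))
  = Cminus (f (b * qst s t ^ n)) (f (b * qst s t ^ (S n))).
Proof.
  intros Hp Hd Hq H1.
  assert (Hpq : phi' s t = qst s t * phi s t) by (unfold qst; field; auto).
  set (q := qst s t) in *. set (p := phi s t) in *. set (p' := phi' s t) in *.
  destruct (Req_dec b 0) as [Hb|Hb].
  { subst b. rewrite !Rmult_0_l. destruct (f 0) as [u1 u2].
    destruct (Dst s t f (0/p)) as [d1 d2].
    unfold Cmult, Cminus, Cplus, Copp, RtoC; simpl. f_equal; ring. }
  assert (Hqn : q ^ n <> 0) by (apply pow_nonzero; auto).
  unfold Dst. fold p p'. destruct (Req_EM_T (b * q ^ n / p) 0) as [e|_].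
  { exfalso. unfold Rdiv in e. apply Rmult_integral in e as [e|e].
    - apply Rmult_integral in e as [e|e]; auto.
    - apply Rinv_neq_0_compat in Hp; auto. }
  replace (p * (b * q ^ n / p)) with (b * q ^ n) by (field; auto).
  replace (p' * (b * q ^ n / p)) with (b * q ^ S n) by (rewrite Hpq; simpl; field; auto).
  replace ((p - p') * (b * q ^ n / p)) with ((1 - q) * q ^ n * b) by (rewrite Hpq; field; auto).
  assert (Hc : (1 - q) * q ^ n * b <> 0).
  { repeat apply Rmult_integral_contrapositive_currified; auto. }
  destruct (f (b * q ^ n)) as [u1 u2]. destruct (f (b * q ^ S n)) as [w1 w2].
  set (c := (1 - q) * q ^ n * b) in *.
  unfold Cdiv, Cinv, Cmult, Cminus, Cplus, Copp, RtoC; simpl.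
  unfold c. f_equal; field; repeat split; auto; simpl; lra.
Qed.

Lemma shiftS (g : nat -> C) L :
  filterlim g eventually (locally L) -> filterlim (fun n => g (S n)) eventually (locally L).
Proof.
  intros H. eapply filterlim_comp; [|exact H].
  intros P [N HN]. exists N. intros m Hm. apply HN. lia.
Qed.

Lemma lim_minus (u v : nat -> C) x y :
  filterlim u eventually (locally x) -> filterlim v eventually (locally y) ->
  filterlim (fun n => Cminus (u n) (v n)) eventually (locally (Cminus x y)).
Proof.
  intros Hu Hv.
  assert (E : Cminus x y = @plus C_R_NormedModule x (opp y)) by reflexivity.
  rewrite E.
  apply (filterlim_ext (fun n => @plus C_R_NormedModule (u n) (opp (v n)))); [reflexivity|].
  eapply filterlim_comp_2; [exact Hu | | apply (@filterlim_plus _ C_R_NormedModule)].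
  eapply filterlim_comp; [exact Hv | apply (@filterlim_opp _ C_R_NormedModule)].
Qed.

Theorem mainTheorem6 (s t : R) (a b : R) (f : R -> C) :
  s <> 0 ->
  s ^ 2 + 4 * t > 0 ->
  0 < Rabs (qst s t) < 1 ->
  L1st s t a b (Dst s t f) ->
  (forall La Lb : C,
     filterlim (fun n : nat => f (a * qst s t ^ n)) eventually (locally La) ->
     filterlim (fun n : nat => f (b * qst s t ^ n)) eventually (locally Lb) ->
     is_st_integral s t (Dst s t f) a b
       (Cminus (Cminus (f b) Lb) (Cminus (f a) La)))
  /\
  (continuous f 0 ->
     is_st_integral s t (Dst s t f) a b (Cminus (f b) (f a))).
Proof.
  intros Hs Hd [Hq0 Hq1] _.
  assert (Hq : qst s t <> 0) by (intro e; rewrite e, Rabs_R0 in Hq0; lra).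
  assert (Hp : phi s t <> 0).
  { intro e. apply Hq. unfold qst. rewrite e. unfold Rdiv. rewrite Rinv_0. ring. }
  assert (Hpp : phi s t - phi' s t <> 0).
  { unfold phi, phi'. assert (0 < sqrt (s ^ 2 + 4 * t)) by (apply sqrt_lt_R0; lra). lra. }
  assert (H1 : 1 - qst s t <> 0).
  { intro e. assert (qst s t = 1) by lra. rewrite H, Rabs_R1 in Hq1. lra. }
  assert (Hterm : forall n, st_integral_term s t (Dst s t f) a b n =
     Cminus (Cminus (f (b * qst s t ^ n)) (f (b * qst s t ^ S n)))
            (Cminus (f (a * qst s t ^ n)) (f (a * qst s t ^ S n)))).
  { intro n. unfold st_integral_term. rewrite <- !term_eq by auto.
    destruct (Dst s t f (b * qst s t ^ n / phi s t)) as [x1 x2].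
    destruct (Dst s t f (a * qst s t ^ n / phi s t)) as [y1 y2].
    unfold Cmult, Cminus, Cplus, Copp, RtoC; simpl. f_equal; ring. }
  assert (Hsum : forall n, sum_n (st_integral_term s t (Dst s t f) a b) n =
     Cminus (Cminus (f b) (f (b * qst s t ^ S n)))
            (Cminus (f a) (f (a * qst s t ^ S n)))).
  { induction n.
    - rewrite sum_O, Hterm. simpl. rewrite !Rmult_1_r. reflexivity.
    - rewrite sum_Sn, IHn, Hterm.
      destruct (f b), (f a), (f (b * qst s t ^ S n)), (f (a * qst s t ^ S n)),
        (f (b * qst s t ^ S (S n))), (f (a * qst s t ^ S (S n))).
      unfold plus; simpl. unfold Cmult, Cminus, Cplus, Copp, RtoC; simpl. f_equal; ring. }
  assert (P1 : forall La Lb : C,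
     filterlim (fun n : nat => f (a * qst s t ^ n)) eventually (locally La) ->
     filterlim (fun n : nat => f (b * qst s t ^ n)) eventually (locally Lb) ->
     is_st_integral s t (Dst s t f) a b
       (Cminus (Cminus (f b) Lb) (Cminus (f a) La))).
  { intros La Lb Ha Hb. unfold is_st_integral, is_series.
    eapply filterlim_ext. { intro n. symmetry. apply Hsum. }
    apply lim_minus; apply lim_minus; try apply filterlim_const;
      apply (shiftS (fun n => f (_ * qst s t ^ n))); assumption. }
  split; [exact P1|].
  intros Hc.
  assert (Hz : forall c, filterlim (fun n => f (c * qst s t ^ n)) eventually (locally (f 0))).
  { intro c. eapply filterlim_comp; [|exact Hc].
    assert (L : is_lim_seq (fun n => c * qst s t ^ n) (Rbar_mult c 0)).
    { apply is_lim_seq_scal_l. apply is_lim_seq_geom. exact Hq1. }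
    simpl in L. rewrite Rmult_0_r in L. exact L. }
  replace (Cminus (f b) (f a)) with (Cminus (Cminus (f b) (f 0)) (Cminus (f a) (f 0))).
  - apply P1; apply Hz.
  - destruct (f b), (f a), (f 0). unfold Cminus, Cplus, Copp; simpl. f_equal; ring.
Qed.
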